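(* Let $k\ge 100$ be an integer and let the roots of $f_k(X)=X^k-X^{k-1}-\cdots-X-1$ be $\alpha_1,\ldots,\alpha_{k-1},\alpha_k$, where $\alpha_k$ is the unique real root greater than $1$. Then for all distinct $i,j\in\{1,\ldots,k-1\}$, $$\frac{k^2}{13000\,e^3}<|\alpha_i-\alpha_j|^2\prod_{\substack{1\le \ell\le k-1\\ \ell\ne i,j}}|\alpha_i-\alpha_\ell|\,|\alpha_j-\alpha_\ell|.$$
   Context: $f_k(X)=X^k-X^{k-1}-\cdots-X-1$ has exactly one root outside the closed unit disk, denoted $\alpha_k$, which is real and larger than $1$; the other roots $\alpha_1,\ldots,\alpha_{k-1}$ have absolute value less than $1$, and all roots are distinct. *)

(* Defs.v *)
From mathcomp Require Import all_boot all_algebra.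
From mathcomp Require Export complex.
From mathcomp Require Export all_classical all_reals all_analysis.
Import GRing.Theory Num.Theory.
Local Open Scope ring_scope.

Definition fk (R : realType) (k : nat) : {poly R[i]} :=
  'X^k - \sum_(i < k) 'X^i.

(* Main.v *)
Require Import Defs.
From mathcomp Require Import all_boot all_order all_algebra.
From mathcomp Require Import complex.
From mathcomp Require Import all_classical all_reals all_analysis.
From mathcomp Require Import ring lra zify.
Import Order.TTheory GRing.Theory Num.Theory.
Local Open Scope ring_scope.

Lemma real_bound (F : realFieldType) (K r m s t L w b Dn : F) :
  100 <= K -> 0 <= r -> r <= 151/100 -> 0 <= m -> 0 <= s -> 0 <= t -> 0 <= Dn ->
  b <= 2 -> m * r * s = 1 -> t * Dn = m * L -> s <= 2 + r -> t <= r + 1 ->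
  w <= r + b -> 2 * K - (K + 1) * r <= L -> K * w <= 100 * Dn.
Proof.
move=> hK hr0 hr hm hs ht hD hb e1 e2 hs2 ht2 hw hL.
have hmr : 1 <= m * (r * (2 + r)).
  have hmr0 : 0 <= m * r by apply: mulr_ge0.
  rewrite -e1; nra.
have hr0' : 0 < r.
  rewrite lt0r hr0 andbT; apply/eqP => r0; move: e1; rewrite r0 mulr0 mul0r => /eqP.
  by rewrite eq_sym oner_eq0.
have hDn : m * L <= Dn * (r + 1) by rewrite -e2 mulrC ler_wpM2l.
have hL0 : 47 / 100 * K <= L by nra.
have hc : r * (2 + r) * (r + 1) * (r + 2) <= 47.
  have h1 : r * (2 + r) <= 151/100 * (351/100) by nra.
  have h2 : (r + 1) * (r + 2) <= 251/100 * (351/100) by nra.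
  have h3 : 0 <= r * (2 + r) by nra.
  have h4 : 0 <= (r + 1) * (r + 2) by nra.
  rewrite -mulrA; apply: le_trans (ler_pM h3 h4 h1 h2) _; lra.
have hLm : L <= m * L * (r * (2 + r)).
  have hL0' : 0 <= L by lra.
  by rewrite -mulrA [L * _]mulrC mulrA -[X in X <= _]mul1r ler_wpM2r // mulrC.
have key : L <= Dn * (r + 1) * (r * (2 + r)).
  apply: le_trans hLm _; apply: ler_wpM2r; [nra | exact: hDn].
have hw' : w <= r + 2 by lra.
nra.
Qed.

Section S.
Variable R : realType.
Notation C := (real_complex R).
Definition nr (z : R[i]) : R := complex.Re `|z|.
Lemma nE z : `|z| = C (nr z).
Proof. by []. Qed.
Lemma nrM x y : nr (x * y) = nr x * nr y.
Proof. by apply: complexI; rewrite rmorphM -!nE normrM. Qed.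
Lemma nr_ge0 x : 0 <= nr x.
Proof. by have := normr_ge0 x; rewrite nE -(rmorph0 C) lecR. Qed.
Lemma nrD x y : nr (x + y) <= nr x + nr y.
Proof. by have := ler_normD x y; rewrite !nE -rmorphD lecR. Qed.
Lemma nrN x : nr (- x) = nr x.
Proof. by apply: complexI; rewrite -!nE normrN. Qed.
Lemma nrB x y : nr x - nr y <= nr (x - y).
Proof. by have := lerB_dist x y; rewrite !nE -rmorphB lecR. Qed.
Lemma nrX x n : nr (x ^+ n) = nr x ^+ n.
Proof. by apply: complexI; rewrite rmorphXn -!nE normrX. Qed.
Lemma nr_prod (I : finType) (P : pred I) (F : I -> R[i]) :
  nr (\prod_(l | P l) F l) = \prod_(l | P l) nr (F l).
Proof. by apply: complexI; rewrite rmorph_prod -nE normr_prod. Qed.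
Lemma nrR (b : R) : 0 <= b -> nr (C b) = b.
Proof. by move=> hb; apply: complexI; rewrite -nE ger0_norm // ler0c. Qed.
Lemma nrn n : nr n%:R = n%:R.
Proof. by rewrite -(rmorph_nat C) nrR. Qed.
Lemma nr_eq0 x : (nr x == 0) = (x == 0).
Proof. by rewrite -[RHS]normr_eq0 nE -(rmorph0 C) (inj_eq (@complexI R)). Qed.
End S.
Arguments nr {R}.
Arguments nE {R}. Arguments nrM {R}. Arguments nr_ge0 {R}. Arguments nrD {R}. Arguments nrN {R}. Arguments nrB {R}. Arguments nrX {R}. Arguments nr_prod {R}. Arguments nrR {R}. Arguments nrn {R}. Arguments nr_eq0 {R}.
Section P.
Variable R : realType.

Lemma fk_sum k : \sum_(i < k) ('X^i : {poly R[i]}) = \poly_(i < k) 1.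
Proof. by rewrite poly_def; apply: eq_bigr => i _; rewrite scale1r. Qed.

Lemma fk_monic k : fk R k \is monic /\ size (fk R k) = k.+1.
Proof.
have hs : (size (- \sum_(i < k) ('X^i : {poly R[i]})) < size ('X^k : {poly R[i]}))%N.
  by rewrite size_polyN fk_sum size_polyXn ltnS size_poly.
split; first by rewrite monicE /fk lead_coefDl // lead_coefXn.
by rewrite /fk size_polyDl // size_polyXn.
Qed.

Lemma root_eq k z : root (fk R k) z -> z ^+ k * (2 - z) = 1.
Proof.
rewrite /root /fk hornerD hornerN hornerXn horner_sum subr_eq0 => /eqP hs.
have e := subrX1 z k.
have hs' : z ^+ k = \sum_(i < k) z ^+ i.
  by rewrite hs; apply: eq_bigr => i _; rewrite hornerXn.
rewrite -hs' in e.
have -> : z ^+ k * (2 - z) = 1 + (z ^+ k - 1 - (z - 1) * z ^+ k) by ring.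
by rewrite e subrr addr0.
Qed.

Lemma fk_factor k (alpha : 'I_k -> R[i]) : injective alpha ->
  (forall l, root (fk R k) (alpha l)) ->
  fk R k = \prod_(l < k) ('X - (alpha l)%:P).
Proof.
move=> inj hr.
have hall : all (root (fk R k)) [seq alpha l | l <- index_enum 'I_k].
  by apply/allP => z /mapP [l _ ->]; exact: hr.
have hu : uniq_roots [seq alpha l | l <- index_enum 'I_k].
  by rewrite uniq_rootsE (map_inj_uniq inj) index_enum_uniq.
have [q hq] := uniq_roots_prod_XsubC hall hu.
rewrite big_map in hq.
set P := \prod_(l <- index_enum 'I_k) ('X - (alpha l)%:P) in hq.
have monP : P \is monic by apply: monic_prod_XsubC.
have [monf szf] := fk_monic k.
have monq : q \is monic by rewrite -(monicMr q monP) -hq.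
have szP : size P = k.+1 by rewrite size_prod_XsubC -[X in _ = X.+1]card_ord cardT enumT.
have : size (q * P) = k.+1 by rewrite -hq.
rewrite size_Mmonic ?monic_neq0 // szP => h.
have szq : size q = 1%N by lia.
have q1 : q = 1.
  rewrite (size1_polyC (eq_leq szq)); move/monicP: monq.
  by rewrite /lead_coef szq => ->.
by rewrite hq q1 mul1r.
Qed.

Lemma deriv_at k (alpha : 'I_k -> R[i]) (i : 'I_k) :
  (\prod_(l < k) ('X - (alpha l)%:P))^`().[alpha i] =
  \prod_(l < k | l != i) (alpha i - alpha l).
Proof.
rewrite (bigD1 i) //= derivM derivXsubC mul1r hornerD hornerM hornerXsubC subrr mul0r addr0.
by rewrite horner_prod; apply: eq_bigr => l _; rewrite hornerXsubC.
Qed.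

Lemma fk_ident k : ('X - 1) * fk R k = ('X - 1) * 'X^k - 'X^k + 1.
Proof.
have e := subrX1 ('X : {poly R[i]}) k.
rewrite /fk mulrBr -e; ring.
Qed.

Lemma deriv_fk k z : root (fk R k) z ->
  (z - 1) * (fk R k)^`().[z] = z ^+ k + (z - 1) * (z ^+ k.-1 *+ k) - z ^+ k.-1 *+ k.
Proof.
move=> /eqP; move: (fk_ident k); move: (fk R k) => F hF hz.
have h : (('X - 1) * F)^`().[z] = (('X - 1) * 'X^k - 'X^k + 1 : {poly R[i]})^`().[z].
  by rewrite hF.
move: h; rewrite !poly.derivE !hornerE ?hornerMn ?hornerXn hz.
by rewrite subr0 !mul1r ?mulr0 add0r.
Qed.

Notation C := (real_complex R).
Lemma nr1 : nr (1 : R[i]) = 1.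
Proof. by rewrite -(rmorph1 C) nrR. Qed.

Lemma root_nr k z : root (fk R k) z -> nr z ^+ k * nr (2 - z) = 1.
Proof. by move=> /root_eq h; rewrite -nrX -nrM h nr1. Qed.

Lemma dom_bound k (b : R) : (100 <= k)%N -> 1 < b -> root (fk R k) (C b) ->
  199/100 <= b /\ b < 2.
Proof.
move=> hk hb /root_eq h.
have hr : b ^+ k * (2 - b) = 1.
  apply: (@complexI R); rewrite rmorphM rmorphXn rmorphB rmorph1 -h; congr (_ * (_ - _)).
  by rewrite (rmorph_nat C 2).
set s := \sum_(i < k) b ^+ i.
have hX := subrX1 b k.
have hs : k%:R <= s.
  have -> : (k%:R : R) = \sum_(i < k) 1 by rewrite sumr_const card_ord.
  by apply: ler_sum => i _; apply: exprn_ege1; apply: ltW.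
have e : (b - 1) * (s - 1 - (b - 1) * s) = b ^+ k * (2 - b) - 1.
  by rewrite -[b ^+ k](subrK 1) hX /s; ring.
rewrite hr subrr in e.
move/eqP: e; rewrite mulf_eq0 subr_eq0 (gt_eqF hb) /= => /eqP e2.
have hK : (100 : R) <= k%:R by rewrite (ler_nat R 100 k).
split; nra.
Qed.

Lemma nrCp (x : R) : 0 <= x -> nr (C x) = x.
Proof. exact: nrR. Qed.

Lemma per_root k z (b : R) (D : R[i]) : (100 <= k)%N -> 0 <= b -> b <= 2 ->
  nr z <= 151/100 -> root (fk R k) z ->
  (z - 1) * D = z ^+ k + (z - 1) * (z ^+ k.-1 *+ k) - z ^+ k.-1 *+ k ->
  k%:R * nr (z - C b) <= 100 * nr D.
Proof.
move=> hk hb0 hb hz hroot hD.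
have k1 : k = k.-1.+1 by lia.
have zk : z ^+ k = z ^+ k.-1 * z by rewrite -exprSr -k1.
have E1 : z ^+ k.-1 * z * (2 - z) = 1 by rewrite -zk root_eq.
have E2 : (z - 1) * D = - (z ^+ k.-1 * (2 * k%:R - (k%:R + 1) * z)).
  by rewrite hD zk -[z ^+ k.-1 *+ k]mulr_natr; ring.
have h1 : nr (z ^+ k.-1) * nr z * nr (2 - z) = 1 by rewrite -!nrM E1 nr1.
have h2 : nr (z - 1) * nr D = nr (z ^+ k.-1) * nr (2 * k%:R - (k%:R + 1) * z).
  by rewrite -!nrM E2 nrN.
have c2 : (2 : R[i]) = C 2 by rewrite rmorph_nat.
have c2k : (2 * k%:R : R[i]) = C (2 * k%:R) by rewrite rmorphM !rmorph_nat.
have ck1 : (k%:R + 1 : R[i]) = C (k%:R + 1) by rewrite rmorphD rmorph_nat rmorph1.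
have h3 : nr (2 - z) <= 2 + nr z.
  by apply: le_trans (nrD _ _) _; rewrite nrN c2 nrR.
have h4 : nr (z - 1) <= nr z + 1.
  by apply: le_trans (nrD _ _) _; rewrite nrN nr1.
have h5 : nr (z - C b) <= nr z + b.
  by apply: le_trans (nrD _ _) _; rewrite nrN nrR.
have h6 : 2 * k%:R - (k%:R + 1) * nr z <= nr (2 * k%:R - (k%:R + 1) * z).
  by apply: le_trans (nrB _ _); rewrite nrM c2k ck1 !nrR // addr_ge0.
have hK : (100 : R) <= k%:R by rewrite (ler_nat R 100 k).
apply: (@real_bound R k%:R (nr z) (nr (z^+k.-1)) (nr (2-z)) (nr (z-1)) (nr (2 * k%:R - (k%:R + 1) * z)) (nr (z - C b)) b (nr D)) => //; exact: nr_ge0.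
Qed.
End P.

Theorem mainTheorem5 (R : realType) (k : nat) (alpha : 'I_k -> R[i]) :
  (100 <= k)%N ->
  injective alpha ->
  (forall l : 'I_k, root (fk R k) (alpha l)) ->
  (forall l : 'I_k, val l = k.-1 -> 1 < alpha l) ->
  forall i j : 'I_k, (val i < k.-1)%N -> (val j < k.-1)%N -> i != j ->
    (k ^ 2)%:R / (13000%:R * (real_complex R (expR 1)) ^+ 3)
    < `|alpha i - alpha j| ^+ 2 *
      \prod_(l : 'I_k | [&& (val l < k.-1)%N, l != i & l != j])
         (`|alpha i - alpha l| * `|alpha j - alpha l|).
Proof.
move=> hk inj hroot hdom i j hi hj hij.
have k0 : (0 < k)%N by lia.
have hdk : (k.-1 < k)%N by rewrite ltn_predL.
pose d : 'I_k := Ordinal hdk.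
have hd := hdom d erefl.
have hbeta : alpha d = real_complex R (complex.Re (alpha d)).
  move: hd; rewrite ltcE => /andP [/eqP hI _].
  by move: hI; case: (alpha d) => a c /= ->.
set b := complex.Re (alpha d) in hbeta.
have hb1 : 1 < b by rewrite -ltcR rmorph1 -hbeta.
have [hb199 hb2] : 199/100 <= b /\ b < 2.
  by apply: dom_bound hk hb1 _; rewrite -hbeta.
have hF := @fk_factor R k alpha inj hroot.
have hP : \prod_(l < k) nr (alpha l) = 1.
  have h0 : (fk R k).[0] = -1.
    rewrite /fk hornerD hornerN hornerXn expr0n (negbTE (lt0n_neq0 k0)) add0r horner_sum.
    rewrite (eq_bigr (fun i : 'I_k => (0 : R[i]) ^+ i)); last by move=> l _; rewrite hornerXn.
    case: k {hk hi hj hdk d hd b hbeta hb1 hb199 hb2 hF alpha inj hroot hdom i j hij} k0 => // n _.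
    rewrite big_ord_recl expr0 big1 ?addr0 // => l _.
    by rewrite expr0n.
  move: h0; rewrite hF horner_prod.
  rewrite (eq_bigr (fun l => - alpha l)); last by move=> l _; rewrite hornerXsubC sub0r.
  move/(congr1 nr); rewrite nr_prod nrN nr1 => h1.
  by rewrite -[RHS]h1; apply: eq_bigr => l _; rewrite nrN.
have nr2 : nr (2 : R[i]) = 2 by rewrite (nrn 2).
have hnd : forall l, (val l < k.-1)%N -> l != d.
  by move=> l hl; apply/eqP => e; move: hl; rewrite e /= ltnn.
have hlow : forall l, 1 <= 3 * nr (alpha l) ^+ k.
  move=> l; have e := @root_nr R k _ (hroot l).
  have hs : nr (2 - alpha l) <= 2 + nr (alpha l).
    by apply: le_trans (nrD _ _) _; rewrite nrN nr2.
  have h0 := nr_ge0 (alpha l); have hs0 := nr_ge0 (2 - alpha l).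
  have hx : 0 <= nr (alpha l) ^+ k by exact: exprn_ge0.
  case: (lerP 1 (nr (alpha l))) => h.
    by have := exprn_ege1 k h; lra.
  nra.
have h3k : \prod_(l < k) (3 * nr (alpha l) ^+ k) = 3 ^+ k.
  by rewrite big_split /= prodr_const card_ord prodrXl hP expr1n mulr1.
have hnrd : nr (alpha d) = b by rewrite hbeta nrR //; lra.
have hsmall : forall l, l != d -> nr (alpha l) <= 151/100.
  move=> l hl.
  have hsplit : 3 * nr (alpha l) ^+ k * (3 * b ^+ k) <= 3 ^+ k.
    rewrite -h3k (bigD1 l) //= (bigD1 d) /=; last by rewrite eq_sym.
    rewrite hnrd [X in _ <= X]mulrA; apply: ler_peMr.
      by apply: mulr_ge0; apply: mulr_ge0 => //; apply: exprn_ge0; [exact: nr_ge0 | lra].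
    apply: (big_ind (fun x => 1 <= x)) => //; first by move=> x y; apply: mulr_ege1.
  have h3 : 0 <= (3 : R) ^+ k by apply: exprn_ge0.
  have hr0 := nr_ge0 (alpha l).
  have hb0 : 0 <= b ^+ k by apply: exprn_ge0; lra.
  have hx : 0 <= nr (alpha l) ^+ k by exact: exprn_ge0.
  have hp : (nr (alpha l) * b) ^+ k <= 3 ^+ k by rewrite exprMn; nra.
  have hrb : nr (alpha l) * b <= 3.
    by move: hp; rewrite ler_pXn2r // nnegrE //; apply: mulr_ge0 => //; lra.
  nra.
have hb0 : 0 <= b by lra.
have hbound : forall l, l != d ->
    k%:R * nr (alpha l - real_complex R b) <= 100 * nr (\prod_(m < k | m != l) (alpha l - alpha m)).
  move=> l hl; apply: (@per_root R k (alpha l) b) => //; [lra | by apply: hsmall | ].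
  by rewrite -deriv_at -hF; apply: deriv_fk.
have hdec : forall l o, l != d -> o != d -> l != o ->
    \prod_(m < k | m != l) (alpha l - alpha m) = (alpha l - alpha o) *
    ((alpha l - alpha d) * \prod_(m < k | [&& (val m < k.-1)%N, m != l & m != o]) (alpha l - alpha m)).
  move=> l o hl ho hlo.
  rewrite (bigD1 o) 1?eq_sym //= (bigD1 d) /=; last by rewrite !(eq_sym d) hl ho.
  congr (_ * (_ * _)); apply: eq_bigl => m.
  have e : (m != d) = (val m < k.-1)%N.
    apply/idP/idP => h; last by apply: hnd.
    have := ltn_ord m; move: h; rewrite -val_eqE /=; lia.
  by rewrite e andbC.
have hid := hnd i hi; have hjd := hnd j hj.
have Hi := hbound i hid; rewrite (hdec i j hid hjd hij) !nrM hbeta in Hi.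
have Hj := hbound j hjd; rewrite (hdec j i hjd hid ltac:(by rewrite eq_sym)) !nrM hbeta in Hj.
rewrite nr_prod in Hi; rewrite nr_prod in Hj.
rewrite (eq_bigl (fun m => [&& (val m < k.-1)%N, m != i & m != j])) in Hj; last first.
  by move=> m; rewrite (andbC (m != j)).
rewrite -[alpha j - alpha i]opprB nrN in Hj.
have hwi : 0 < nr (alpha i - real_complex R b).
  by rewrite lt0r nr_ge0 nr_eq0 andbT subr_eq0 -hbeta (inj_eq inj).
have hwj : 0 < nr (alpha j - real_complex R b).
  by rewrite lt0r nr_ge0 nr_eq0 andbT subr_eq0 -hbeta (inj_eq inj).
have -> : `|alpha i - alpha j| ^+ 2 *
      \prod_(l : 'I_k | [&& (val l < k.-1)%N, l != i & l != j])
         (`|alpha i - alpha l| * `|alpha j - alpha l|) =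
   real_complex R (nr (alpha i - alpha j) ^+ 2 *
     ((\prod_(l : 'I_k | [&& (val l < k.-1)%N, l != i & l != j]) nr (alpha i - alpha l)) *
      (\prod_(l : 'I_k | [&& (val l < k.-1)%N, l != i & l != j]) nr (alpha j - alpha l)))).
  rewrite [`|alpha i - alpha j|]nE.
  under eq_bigr => l _ do rewrite !nE -rmorphM.
  by rewrite -rmorph_prod -rmorphXn -rmorphM big_split.
have -> : (k ^ 2)%:R / (13000%:R * (real_complex R (expR 1)) ^+ 3) =
   real_complex R ((k ^ 2)%:R / (13000%:R * (expR 1) ^+ 3)).
  by rewrite [in RHS](rmorphM (real_complex R)) [in RHS]fmorphV [in RHS](rmorphM (real_complex R)) [in RHS](rmorphXn (real_complex R)) !(rmorph_nat (real_complex R)).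
rewrite ltcR.
set A := nr (alpha i - alpha j) in Hi Hj *.
set X := \prod_(l < k | _) nr (alpha i - alpha l) in Hi *.
set Y := \prod_(l < k | _) nr (alpha j - alpha l) in Hj *.
set wi := nr (alpha i - _) in Hi hwi.
set wj := nr (alpha j - _) in Hj hwj.
have K0 : (100 : R) <= k%:R by rewrite (ler_nat R 100 k).
rewrite natrX.
have he : 1 <= expR (1 : R) ^+ 3.
  by apply: exprn_ege1; have := expR_ge1Dx (1 : R); lra.
have hA : 0 <= A by exact: nr_ge0.
have hX : 0 <= X by apply: prodr_ge0 => l _; exact: nr_ge0.
have hY : 0 <= Y by apply: prodr_ge0 => l _; exact: nr_ge0.
have h1 : k%:R <= 100 * (A * X) by nra.
have h2 : k%:R <= 100 * (A * Y) by nra.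
have h3 : k%:R ^+ 2 <= 10000 * (A ^+ 2 * (X * Y)) by nra.
rewrite ltr_pdivrMr; last by nra.
nra.
Qed.
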